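(* Let $f,g,\ell$ be nonnegative integers, $\mathcal{F}\in\mathbb{R}^{\alpha_1\times\cdots\times\alpha_{f+\ell}}$, $\mathcal{G}\in\mathbb{R}^{\beta_1\times\cdots\times\beta_{g+\ell}}$, $\mathbf{p},\mathbf{q}$ permutations of $1:f+\ell$ and $1:g+\ell$, and $\mathbf{r}=\mathbf{p}(1:f)$, $\boldsymbol{\lambda}=\mathbf{p}(f+1:f+\ell)$, $\boldsymbol{\psi}=\mathbf{q}(1:\ell)$, $\mathbf{c}=\mathbf{q}(\ell+1:\ell+g)$, with $\boldsymbol{\alpha}(\boldsymbol{\lambda})=\boldsymbol{\beta}(\boldsymbol{\psi})$. Let $\mathcal{H}\in\mathbb{R}^{\alpha_{r_1}\times\cdots\times\alpha_{r_f}\times\beta_{c_1}\times\cdots\times\beta_{c_g}}$ be given by $\mathcal{H}(\mathbf{i},\mathbf{j})=\sum_{\mathbf{k}=\mathbf{1}}^{\boldsymbol{\alpha}(\boldsymbol{\lambda})}\mathcal{F}^{<\mathbf{p}>}(\mathbf{i},\mathbf{k})\,\mathcal{G}^{<\mathbf{q}>}(\mathbf{k},\mathbf{j})$ for $\mathbf{1}\le\mathbf{i}\le\boldsymbol{\alpha}(\mathbf{r})$, $\mathbf{1}\le\mathbf{j}\le\boldsymbol{\beta}(\mathbf{c})$. Let $\mathbf{S}=\{\mathbf{s}^{(1)},\ldots,\mathbf{s}^{(f+\ell)}\}$ be a blocking of $\mathcal{F}$ and set $\mathbf{R}=\{\mathbf{s}^{(r_1)},\ldots,\mathbf{s}^{(r_f)}\}$,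 $\boldsymbol{\Lambda}=\{\mathbf{s}^{(\lambda_1)},\ldots,\mathbf{s}^{(\lambda_\ell)}\}$. Let $\mathbf{T}=\{\mathbf{t}^{(1)},\ldots,\mathbf{t}^{(g+\ell)}\}$ be a blocking of $\mathcal{G}$ and set $\boldsymbol{\Psi}=\{\mathbf{t}^{(\psi_1)},\ldots,\mathbf{t}^{(\psi_\ell)}\}$, $\mathbf{C}=\{\mathbf{t}^{(c_1)},\ldots,\mathbf{t}^{(c_g)}\}$. If $\mathbf{s}^{(\lambda_k)}=\mathbf{t}^{(\psi_k)}$ for $k=1,\ldots,\ell$, then, regarding $\mathcal{H}$ as blocked by $\mathbf{R}$ in modes $1$ through $f$ and by $\mathbf{C}$ in modes $f+1$ through $f+g$ (so that $\mathbf{R}$ is a blocking for modes $1,\ldots,f$ of $\mathcal{H}$ and $\mathbf{C}$ a blocking for modes $f+1,\ldots,f+g$), \[ \mathcal{H}_{\mathbf{R}\times\mathbf{C}}=\mathcal{F}_{\mathbf{R}\times\boldsymbol{\Lambda}}\cdot\mathcal{G}_{\boldsymbol{\Psi}\times\mathbf{C}}, \] where $\mathcal{F}_{\mathbf{R}\times\boldsymbol{\Lambda}}=P_{\mathbf{R}}\mathcal{F}_{\mathbf{r}\times\boldsymbol{\lambda}}P_{\boldsymbol{\Lambda}}^T$, $\mathcal{G}_{\boldsymbol{\Psi}\times\mathbf{C}}=P_{\boldsymbol{\Psi}}\mathcal{G}_{\boldsymbol{\psi}\times\mathbf{c}}P_{\mathbf{C}}^T$, and $\mathcal{H}_{\m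athbf{R}\times\mathbf{C}}=P_{\mathbf{R}}\mathcal{H}_{[1:f]\times[f+1:f+g]}P_{\mathbf{C}}^T$.
   Context: For an integer vector $\mathbf{v}$ and index vector $\mathbf{s}$, $\mathbf{v}(\mathbf{s})=(v_{s_1},v_{s_2},\ldots)$; index inequalities are componentwise; $\sum_{\mathbf{k}=\mathbf{1}}^{\mathbf{n}}$ is the nested sum over all $\mathbf{1}\le\mathbf{k}\le\mathbf{n}$. $\mathrm{ivec}(\mathbf{i},\mathbf{n})=i_1+(i_2-1)n_1+\cdots+(i_d-1)n_1\cdots n_{d-1}$; $\mathrm{vec}(\mathcal{X})$ has entry $\mathrm{ivec}(\mathbf{i},\mathbf{n})$ equal to $\mathcal{X}(\mathbf{i})$. The $\mathbf{p}$-transpose is $\mathcal{X}^{<\mathbf{p}>}(i_{p_1},\ldots,i_{p_d})=\mathcal{X}(i_1,\ldots,i_d)$. For $\mathbf{r}=\mathbf{p}(1:e)$, $\mathbf{c}=\mathbf{p}(e+1:d)$ ($0\le e\le d$), the unfolding $\mathcal{X}_{\mathbf{r}\times\mathbf{c}}$ is the matrix with $(\alpha,\beta)$ entry $\mathcal{X}^{<\mathbf{p}>}(i_1,\ldots,i_e,j_1,\ldots,j_{d-e})$, $\alpha=\mathrm{ivec}(\mathbf{i},\mathbf{n}(\mathbf{r}))$, $\beta=\mathrm{ivec}(\mathbf{j},\mathbf{n}(\mathbf{c}))$ (a column vector $\mathrm{vec}(\mathcal{X}^{<\mathbf{p}>})$ if $\mathbf{c}=\emptyset$, a row vector $\mathrm{vec}(\mathcal{X}^{<\mathbf{p}>})^T$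 if $\mathbf{r}=\emptyset$). A blocking of a tensor in $\mathbb{R}^{n_1\times\cdots\times n_d}$ is a collection $\{\mathbf{m}^{(1)},\ldots,\mathbf{m}^{(d)}\}$, each $\mathbf{m}^{(k)}=[m^{(k)}_1,\ldots,m^{(k)}_{b_k}]$ a vector of positive integers summing to $n_k$; block $\mathbf{i}$ ($\mathbf{1}\le\mathbf{i}\le\mathbf{b}$) is the subtensor with index ranges $m^{(k)}_1+\cdots+m^{(k)}_{i_k-1}+1:m^{(k)}_1+\cdots+m^{(k)}_{i_k}$ in mode $k$; $\mathrm{vec}_{\mathbf{M}}(\mathcal{X})$ stacks the vecs of the blocks in order of increasing $\mathrm{ivec}(\mathbf{i},\mathbf{b})$. For a blocking $\mathbf{K}$ of tensors of some size $\mathbf{n}$, $P_{\mathbf{K}}$ denotes the unique permutation matrix with $P_{\mathbf{K}}\mathrm{vec}(\mathcal{X})=\mathrm{vec}_{\mathbf{K}}(\mathcal{X})$ for all tensors $\mathcal{X}$ of size $\mathbf{n}$; here $P_{\mathbf{R}}$, $P_{\boldsymbol{\Lambda}}$, $P_{\boldsymbol{\Psi}}$, $P_{\mathbf{C}}$ refer to tensors of sizes $\boldsymbol{\alpha}(\mathbf{r})$, $\boldsymbol{\alpha}(\boldsymbol{\lambda})$, $\boldsymbol{\beta}(\boldsymbol{\psi})$, $\boldsymbol{\beta}(\mathbf{c})$ respectively. *)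

(* Defs.v *)
(* CONVENTIONS: all indices are 0-based (paper index i corresponds to i-1 here);
   a multi-index / size vector is a seq nat; a tensor of order d and size n is a
   function X : seq nat -> R, only its values on in-range indices matter. *)
From HB Require Import structures.
From mathcomp Require Import all_boot all_order all_algebra.
From mathcomp Require Import fingroup perm.
From mathcomp Require Import reals.
From mathcomp Require Import zify.
Set Implicit Arguments. Unset Strict Implicit. Unset Printing Implicit Defensive.
Import GRing.Theory.
Local Open Scope ring_scope.

Definition tensor (R : Type) := seq nat -> R.

Definition prodn (n : seq nat) : nat := (\prod_(x <- n) x)%N.

Fixpoint ivec (i n : seq nat) : nat :=
  match i, n with
  | x :: i', m :: n' => (x + m * ivec i' n')%N
  | _, _ => 0%N
  end.

Fixpoint unvec (a : nat) (n : seq nat) : seq nat :=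
  match n with
  | [::] => [::]
  | m :: n' => (a %% m)%N :: unvec (a %/ m)%N n'
  end.

Fixpoint indices (n : seq nat) : seq (seq nat) :=
  match n with
  | [::] => [:: [::]]
  | m :: n' => [seq x :: y | x <- iota 0 m, y <- indices n']
  end.

Definition pseq d (p : 'S_d) : seq nat := [seq val (p k) | k <- enum 'I_d].

Definition sub T (x0 : T) (v : seq T) (s : seq nat) : seq T := [seq nth x0 v k | k <- s].

Section Tensors.
Variable R : nzRingType.

(* p-transpose: X^<p>(i_{p_1},...,i_{p_d}) = X(i_1,...,i_d),
   i.e. X^<p>(j) = X(i) with i_m = j_{p^{-1}(m)} *)
Definition ptrans d (p : 'S_d) (X : tensor R) : tensor R :=
  fun j => X [seq nth 0%N j (val ((p^-1)%g m)) | m <- enum 'I_d].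

(* unfolding X_{r x c} with r = p(1:e), c = p(e+1:d), for X of size n *)
Definition unf d (n : seq nat) (p : 'S_d) (e : nat) (X : tensor R) :
  'M[R]_(prodn (sub 0%N n (take e (pseq p))), prodn (sub 0%N n (drop e (pseq p)))) :=
  \matrix_(a, b) ptrans p X (unvec a (sub 0%N n (take e (pseq p)))
                             ++ unvec b (sub 0%N n (drop e (pseq p)))).

Definition is_blocking (K : seq (seq nat)) (n : seq nat) : Prop :=
  map sumn K = n /\ all (all (fun m => 0 < m)%N) K.

Fixpoint blk (s : seq nat) (x : nat) : nat * nat :=
  match s with
  | [::] => (0%N, x)
  | m :: s' => if (x < m)%N then (0%N, x)
               else let bo := blk s' (x - m) in (bo.1.+1, bo.2)
  end.

Definition blk_index (K : seq (seq nat)) (x : seq nat) : seq nat :=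
  [seq (blk (nth [::] K k) (nth 0%N x k)).1 | k <- iota 0 (size K)].
Definition blk_offset (K : seq (seq nat)) (x : seq nat) : seq nat :=
  [seq (blk (nth [::] K k) (nth 0%N x k)).2 | k <- iota 0 (size K)].
Definition nblocks (K : seq (seq nat)) : seq nat := map size K.
Definition blk_size (K : seq (seq nat)) (i : seq nat) : seq nat :=
  [seq nth 0%N (nth [::] K k) (nth 0%N i k) | k <- iota 0 (size K)].

(* position in vec_K(X) of the entry X(x): vec_K stacks the vecs of the blocks in
   order of increasing ivec(i,b); so it is the total length of the blocks
   preceding block i plus the position ivec(offset, size of block i) of x inside
   its block. *)
Definition blkpos (K : seq (seq nat)) (x : seq nat) : nat :=
  ((\sum_(a < ivec (blk_index K x) (nblocks K))
      prodn (blk_size K (unvec a (nblocks K))))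
   + ivec (blk_offset K x) (blk_size K (blk_index K x)))%N.

(* P_K: the permutation matrix with P_K vec(X) = vec_K(X) for tensors of size n:
   entry (a,b) is 1 iff the b-th entry of vec(X) is the a-th entry of vec_K(X). *)
Definition Pblk (K : seq (seq nat)) (n : seq nat) : 'M[R]_(prodn n) :=
  \matrix_(a, b) (blkpos K (unvec b n) == a)%:R.

End Tensors.

Lemma pseq1 n : pseq (1%g : 'S_n) = iota 0 n.
Proof.
rewrite /pseq -val_enum_ord; apply: eq_map => k; by rewrite perm1.
Qed.

Lemma sub_cat_take f g (n1 n2 : seq nat) :
  size n1 = f -> sub 0%N (n1 ++ n2) (take f (pseq (1%g : 'S_(f + g)))) = n1.
Proof.
move=> s1; rewrite pseq1 take_iota minnC /minn ltnNge leq_addr /=.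
apply: (@eq_from_nth _ 0%N); first by rewrite size_map size_iota.
move=> k; rewrite size_map size_iota => kf.
by rewrite (nth_map 0%N) ?size_iota // nth_iota // ?add0n nth_cat s1 kf.
Qed.

Lemma sub_cat_drop f g (n1 n2 : seq nat) :
  size n1 = f -> size n2 = g ->
  sub 0%N (n1 ++ n2) (drop f (pseq (1%g : 'S_(f + g)))) = n2.
Proof.
move=> s1 s2; rewrite pseq1 drop_iota add0n addKn.
apply: (@eq_from_nth _ 0%N); first by rewrite size_map size_iota.
move=> k; rewrite size_map size_iota => kg.
rewrite (nth_map 0%N) ?size_iota // nth_iota // ?add0n nth_cat s1.
by rewrite ltnNge leq_addr /= addKn.
Qed.

Lemma size_sub_take d f (n : seq nat) (p : 'S_(f + d)) :
  size (sub 0%N n (take f (pseq p))) = f.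
Proof. rewrite size_map size_take size_map size_enum_ord; case: ifP => //; lia. Qed.

Lemma size_sub_drop d f (n : seq nat) (p : 'S_(f + d)) :
  size (sub 0%N n (drop f (pseq p))) = d.
Proof. by rewrite size_map size_drop size_map size_enum_ord addKn. Qed.

(* Main.v *)
Require Import Defs.
From HB Require Import structures.
From mathcomp Require Import all_boot all_order all_algebra.
From mathcomp Require Import fingroup perm.
From mathcomp Require Import reals.
From mathcomp Require Import zify.
Set Implicit Arguments. Unset Strict Implicit. Unset Printing Implicit Defensive.
Import GRing.Theory.

Lemma prodn_cons m n : prodn (m :: n) = (m * prodn n)%N.
Proof. by rewrite /prodn big_cons. Qed.

Lemma size_unvec a n : size (unvec a n) = size n.
Proof. by elim: n a => //= m n IH a; rewrite IH. Qed.

Lemma unvec_range a n : (a < prodn n)%N -> all2 (fun x m => x < m)%N (unvec a n) n.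
Proof.
elim: n a => //= m n IH a; rewrite prodn_cons => h.
have m0 : (0 < m)%N by case: m h => //.
rewrite ltn_pmod //= IH // ltn_divLR // mulnC //.
Qed.

Lemma unvecK a n : (a < prodn n)%N -> ivec (unvec a n) n = a.
Proof.
elim: n a => //= [|m n IH] a; first by rewrite /prodn big_nil; case: a.
rewrite prodn_cons => h.
have m0 : (0 < m)%N by case: m h => //.
by rewrite IH ?ltn_divLR // 1?mulnC // addnC -divn_eq.
Qed.

Lemma ivecK i n : all2 (fun x m => x < m)%N i n -> unvec (ivec i n) n = i.
Proof.
elim: n i => [|m n IH] [|x i] //= /andP[xm h].
have m0 : (0 < m)%N by case: m xm.
rewrite addnC mulnC modnMDl modn_small // divnMDl // divn_small // addn0 IH //.
Qed.

Lemma ivec_lt i n : all2 (fun x m => x < m)%N i n -> (ivec i n < prodn n)%N.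
Proof.
elim: n i => [|m n IH] [|x i] //=; first by rewrite /prodn big_nil.
move=> /andP[xm h]; rewrite prodn_cons; have := IH _ h; nia.
Qed.

Lemma mem_indices i n : all2 (fun x m => x < m)%N i n -> i \in indices n.
Proof.
elim: n i => [|m n IH] [|x i] //= /andP[xm h].
by apply: (allpairs_f_dep (fun x y => x :: y)); rewrite ?mem_iota //= IH.
Qed.

Lemma big_mixed (T : Type) (idx : T) (op : Monoid.com_law idx) m N (Fn : nat -> nat -> T) :
  \big[op/idx]_(c < m * N) Fn (c %% m)%N (c %/ m)%N =
  \big[op/idx]_(c < N) \big[op/idx]_(x < m) Fn x c.
Proof.
elim: N => [|N IH]; first by rewrite muln0 !big_ord0.
rewrite big_ord_recr /= -IH.
rewrite -(big_mkord xpredT (fun c => Fn (c %% m)%N (c %/ m)%N)).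
rewrite -(big_mkord xpredT (fun c => Fn (c %% m)%N (c %/ m)%N)).
rewrite -(big_mkord xpredT (fun c => Fn c N)) mulnS addnC.
rewrite (big_cat_nat _ (leq_addr m (m * N))) //=; congr (op _ _).
rewrite -{1}(add0n (m * N)) big_addn addKn; apply: eq_big_nat => x /= xm.
have m0 : (0 < m)%N by lia.
have xm' : (x < m)%N by lia.
by rewrite addnC [(m * N)%N]mulnC divnMDl // divn_small // addn0 modnMDl modn_small.
Qed.

Lemma big_indices (T : Type) (idx : T) (op : Monoid.com_law idx) n (phi : seq nat -> T) :
  \big[op/idx]_(k <- indices n) phi k = \big[op/idx]_(c < prodn n) phi (unvec c n).
Proof.
elim: n phi => [|m n IH] phi /=.
  by rewrite big_seq1 /prodn big_nil big_ord1.
rewrite big_allpairs_dep prodn_cons /=.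
rewrite (big_mixed op m (prodn n) (fun x c => phi (x :: unvec c n))) /=.
under eq_bigr do rewrite IH.
rewrite exchange_big /=.
by rewrite -(big_mkord xpredT (fun j => \big[op/idx]_(i < prodn n) phi (j :: unvec i n))) /index_iota subn0.
Qed.
Lemma blk_rec s x : x = (sumn (take (blk s x).1 s) + (blk s x).2)%N.
Proof.
elim: s x => [|m s IH] x //=; case: ifP => // xm /=.
move: (IH (x - m)%N); lia.
Qed.

Lemma blk_lt s x : (x < sumn s)%N ->
  ((blk s x).1 < size s)%N && ((blk s x).2 < nth 0%N s (blk s x).1)%N.
Proof.
elim: s x => [|m s IH] x //=; case: ifP => //= xm h.
by apply: IH; lia.
Qed.

Lemma all2_nth (r : nat -> nat -> bool) s t : size s = size t ->
  (forall k, (k < size s)%N -> r (nth 0%N s k) (nth 0%N t k)) -> all2 r s t.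
Proof.
elim: s t => [|x s IH] [|y t] //= [e] h.
rewrite (h 0%N) //= IH // => k ks; exact: (h k.+1).
Qed.

Lemma all2_nthE (r : nat -> nat -> bool) s t k : all2 r s t ->
  (k < size s)%N -> r (nth 0%N s k) (nth 0%N t k).
Proof.
elim: s t k => [|x s IH] [|y t] //= [|k] /andP[h1 h2] //= ks; exact: IH.
Qed.

Lemma all2_size (r : nat -> nat -> bool) s t : all2 r s t -> size s = size t.
Proof. by elim: s t => [|x s IH] [|y t] //= /andP[_ /IH ->]. Qed.

Lemma nth_mapiota (T : Type) (x0 : T) (h : nat -> T) n k : (k < n)%N ->
  nth x0 [seq h i | i <- iota 0 n] k = h k.
Proof. by move=> kn; rewrite (nth_map 0%N) ?size_iota // nth_iota. Qed.

Section Blk.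
Variables (K : seq (seq nat)) (n : seq nat).
Hypothesis hK : map sumn K = n.

Let ltn2 := (fun x m : nat => x < m)%N.

Lemma sizeKn : size K = size n.
Proof. by rewrite -hK size_map. Qed.

Lemma nthn k : nth 0%N n k = sumn (nth [::] K k).
Proof.
case: (ltnP k (size K)) => kK; first by rewrite -hK (nth_map [::]).
by rewrite !nth_default // -sizeKn.
Qed.

Lemma rangeI x : all2 ltn2 x n -> all2 ltn2 (blk_index K x) (nblocks K).
Proof.
move=> hx; have sx := all2_size hx.
apply: all2_nth; first by rewrite /blk_index /nblocks !size_map size_iota.
move=> k; rewrite /blk_index size_map size_iota => kK.
rewrite nth_mapiota // /nblocks (nth_map [::]) //.
have kx : (k < size x)%N by rewrite sx -sizeKn.
have h := all2_nthE hx kx; rewrite /ltn2 nthn in h.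
by have /andP[h1 h2] := blk_lt h; rewrite /ltn2.
Qed.

Lemma rangeO x : all2 ltn2 x n ->
  all2 ltn2 (blk_offset K x) (blk_size K (blk_index K x)).
Proof.
move=> hx; have sx := all2_size hx.
apply: all2_nth; first by rewrite /blk_index /blk_size /blk_offset !size_map size_iota.
move=> k; rewrite /blk_offset size_map size_iota => kK.
rewrite nth_mapiota // /blk_size nth_mapiota // /blk_index nth_mapiota //.
have kx : (k < size x)%N by rewrite sx -sizeKn.
have h := all2_nthE hx kx; rewrite /ltn2 nthn in h.
by have /andP[h1 h2] := blk_lt h; rewrite /ltn2.
Qed.

Definition W a := prodn (blk_size K (unvec a (nblocks K))).
Definition Ssum t := (\sum_(a < t) W a)%N.

Lemma Ssum_mono t1 t2 : (t1 <= t2)%N -> (Ssum t1 <= Ssum t2)%N.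
Proof.
move=> le; rewrite /Ssum -!(big_mkord xpredT W) [X in (_ <= X)%N](big_cat_nat (leq0n t1) le) /=.
exact: leq_addr.
Qed.

Lemma blkposE x : blkpos K x =
  (Ssum (ivec (blk_index K x) (nblocks K)) + ivec (blk_offset K x) (blk_size K (blk_index K x)))%N.
Proof. by []. Qed.

Lemma blkpos_bnd x : all2 ltn2 x n ->
  (Ssum (ivec (blk_index K x) (nblocks K)) <= blkpos K x)%N /\
  (blkpos K x < Ssum (ivec (blk_index K x) (nblocks K)).+1)%N.
Proof.
move=> hx; rewrite blkposE; split; first exact: leq_addr.
rewrite /Ssum big_ord_recr /= ltn_add2l /W ivecK; last exact: rangeI.
exact: ivec_lt (rangeO hx).
Qed.

Lemma Wtotal : Ssum (prodn (nblocks K)) = prodn n.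
Proof.
rewrite -hK /Ssum /W -(big_indices _ _ (fun I => prodn (blk_size K I))).
clear hK; elim: K => [|s K' IH].
  by rewrite /= big_seq1 /blk_size /= /prodn big_nil.
rewrite /nblocks /= big_allpairs_dep /= prodn_cons -IH.
rewrite sumnE [in RHS](big_nth 0%N) big_distrl /= /index_iota subn0; apply: eq_bigr => x _.
rewrite big_distrr /=; apply: eq_bigr => I _.
suff -> : blk_size (s :: K') (x :: I) = nth 0%N s x :: blk_size K' I by rewrite prodn_cons.
rewrite /blk_size /= -[1%N]add0n (iotaDl 1 0) -map_comp; congr (_ :: _); apply: eq_map => k /=.
Qed.

Lemma blkpos_inj x y : all2 ltn2 x n -> all2 ltn2 y n -> blkpos K x = blkpos K y -> x = y.
Proof.
move=> hx hy e.
have ett : ivec (blk_index K x) (nblocks K) = ivec (blk_index K y) (nblocks K).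
  have [bx1 bx2] := blkpos_bnd hx; have [by1 by2] := blkpos_bnd hy.
  move: bx1 bx2 by1 by2.
  set tx := ivec (blk_index K x) (nblocks K); set ty := ivec (blk_index K y) (nblocks K).
  move=> bx1 bx2 by1 by2.
  case: (ltngtP tx ty) => // lt.
    have := Ssum_mono lt; lia.
  have := Ssum_mono lt; lia.
have eI : blk_index K x = blk_index K y.
  have := congr1 (unvec ^~ (nblocks K)) ett; rewrite /= !ivecK //; exact: rangeI.
have eO : blk_offset K x = blk_offset K y.
  move: e; rewrite !blkposE ett eI => /addnI e.
  have := congr1 (unvec ^~ (blk_size K (blk_index K y))) e.
  rewrite /= !ivecK //; [exact: rangeO | rewrite -eI; exact: rangeO].
have sx := all2_size hx; have sy := all2_size hy.
apply: (@eq_from_nth _ 0%N); first by rewrite sx sy.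
move=> k kx; have kK : (k < size K)%N by rewrite sizeKn -sx.
rewrite (blk_rec (nth [::] K k) (nth 0%N x k)) (blk_rec (nth [::] K k) (nth 0%N y k)).
have := congr1 (fun s => nth 0%N s k) eI; rewrite /= /blk_index !nth_mapiota // => ->.
have := congr1 (fun s => nth 0%N s k) eO; rewrite /= /blk_offset !nth_mapiota // => ->.
by [].
Qed.

Lemma blkpos_lt x : all2 ltn2 x n -> (blkpos K x < prodn n)%N.
Proof.
move=> hx; have [_ h] := blkpos_bnd hx; apply: (leq_trans h).
rewrite -Wtotal; apply: Ssum_mono; exact: ivec_lt (rangeI hx).
Qed.

End Blk.

Local Open Scope ring_scope.
Lemma PblkTP (R : nzRingType) K n : map sumn K = n -> (Pblk R K n)^T *m Pblk R K n = 1%:M.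
Proof.
move=> hK; apply/matrixP => b b'; rewrite !mxE.
have hb := unvec_range (ltn_ord b).
have hb' := unvec_range (ltn_ord b').
have pb := blkpos_lt hK hb.
rewrite (bigD1 (Ordinal pb)) //= big1 ?addr0; last first.
  move=> a ne; rewrite !mxE.
  suff -> : (blkpos K (unvec b n) == a) = false by rewrite mul0r.
  by apply/negbTE; apply: contra ne => /eqP e; apply/eqP/val_inj; rewrite /= e.
rewrite !mxE eqxx mul1r.
have -> : (blkpos K (unvec b' n) == blkpos K (unvec b n)) = (b == b').
  apply/eqP/eqP => [e|->] //.
  have := blkpos_inj hK hb' hb e => /(congr1 (ivec ^~ n)) /=.
  by rewrite !unvecK // => e'; apply/val_inj.
by case: eqP.
Qed.
Unset Implicit Arguments. Set Strict Implicit.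
Lemma cast_lemma (R : nzRingType) (n1 n2 : seq nat) (e : n1 = n2) (K1 K2 : seq (seq nat))
  (eK : K1 = K2) (a b c : nat)
  (ce : prodn n2 = prodn n1) (A : 'M[R]_(a, prodn n1)) (B : 'M[R]_(prodn n2, b)) (C : 'M[R]_(b, c)) :
  map sumn K1 = n1 ->
  A *m (Pblk R K1 n1)^T *m castmx (ce, erefl) (Pblk R K2 n2 *m B *m C) =
  A *m castmx (ce, erefl) B *m C.
Proof.
move=> hK; subst K2 n2.
have -> : ce = erefl by apply: eq_irrelevance.
by rewrite !castmx_id -!mulmxA (mulmxA _^T) PblkTP // mul1mx.
Qed.

Lemma ptrans1 (R : nzRingType) d (X : tensor R) j : size j = d -> ptrans (1%g : 'S_d) X j = X j.
Proof.
move=> sj; rewrite /ptrans; congr X.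
rewrite -[RHS](mkseq_nth 0%N) sj /mkseq -val_enum_ord -map_comp.
by apply: eq_map => m /=; rewrite invg1 perm1.
Qed.

Lemma sub_map_sumn (S : seq (seq nat)) alpha s :
  map sumn S = alpha -> map sumn (sub [::] S s) = sub 0%N alpha s.
Proof.
move=> hS; rewrite /sub -map_comp; apply: eq_map => k /=.
case: (ltnP k (size S)) => kS; first by rewrite -hS (nth_map [::]).
by rewrite !nth_default // -hS size_map.
Qed.

Theorem corollary4p2 (R : realType) (f g l : nat)
  (alpha beta : seq nat) (F G H : tensor R)
  (p : 'S_(f + l)) (q : 'S_(l + g))
  (S T : seq (seq nat))
  (Halpha : size alpha = (f + l)%N) (Hbeta : size beta = (g + l)%N)
  (hlam : sub 0%N alpha (drop f (pseq p)) = sub 0%N beta (take l (pseq q)))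
  (hH : forall i j, i \in indices (sub 0%N alpha (take f (pseq p))) ->
                    j \in indices (sub 0%N beta (drop l (pseq q))) ->
        H (i ++ j) = \sum_(k <- indices (sub 0%N alpha (drop f (pseq p))))
                       ptrans p F (i ++ k) * ptrans q G (k ++ j))
  (hS : is_blocking S alpha) (hT : is_blocking T beta)
  (hST : forall k, (k < l)%N ->
         nth [::] S (nth 0%N (drop f (pseq p)) k) = nth [::] T (nth 0%N (take l (pseq q)) k)) :
  let Rb := sub [::] S (take f (pseq p)) in
  let Lb := sub [::] S (drop f (pseq p)) in
  let Pb := sub [::] T (take l (pseq q)) in
  let Cb := sub [::] T (drop l (pseq q)) in
  Pblk R Rb (sub 0%N alpha (take f (pseq p)))
    *m castmx (congr1 prodn (sub_cat_take g (sub 0%N beta (drop l (pseq q)))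
                               (size_sub_take alpha p)),
               congr1 prodn (sub_cat_drop (size_sub_take alpha p)
                               (size_sub_drop beta q)))
        (unf (sub 0%N alpha (take f (pseq p)) ++ sub 0%N beta (drop l (pseq q)))
             (1%g : 'S_(f + g)) f H)
    *m (Pblk R Cb (sub 0%N beta (drop l (pseq q))))^T
  =
  (Pblk R Rb (sub 0%N alpha (take f (pseq p))) *m unf alpha p f F
     *m (Pblk R Lb (sub 0%N alpha (drop f (pseq p))))^T)
  *m castmx (congr1 prodn (esym hlam), erefl)
       (Pblk R Pb (sub 0%N beta (take l (pseq q))) *m unf beta q l G
          *m (Pblk R Cb (sub 0%N beta (drop l (pseq q))))^T).
Proof.
move=> Rb Lb Pb Cb.
have szp : forall d (r : 'S_d), size (pseq r) = d.
  by move=> d r; rewrite /pseq size_map size_enum_ord.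
have eLP : Lb = Pb.
  apply: (@eq_from_nth _ [::]).
    by rewrite /Lb /Pb /sub !size_map size_drop size_take !szp addKn; case: ifP => //; lia.
  move=> k; rewrite /Lb /sub size_map size_drop szp addKn => kl.
  rewrite (nth_map 0%N); last by rewrite size_drop szp addKn.
  rewrite (nth_map 0%N); last by rewrite size_take szp; case: ifP => //; lia.
  exact: hST.
have hKL : map sumn Lb = sub 0%N alpha (drop f (pseq p)).
  by apply: sub_map_sumn; case: hS.
rewrite (@cast_lemma R _ _ hlam _ _ eLP) //.
congr (_ *m _); rewrite -mulmxA; congr (_ *m _).
apply/matrixP => a b; rewrite castmxE !mxE /=.
rewrite (sub_cat_take g (sub 0%N beta (drop l (pseq q))) (size_sub_take alpha p)).
rewrite (sub_cat_drop (size_sub_take alpha p) (size_sub_drop beta q)).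
rewrite ptrans1; last by rewrite size_cat !size_unvec size_sub_take size_sub_drop.
rewrite hH; try (apply: mem_indices; apply: unvec_range; exact: ltn_ord).
rewrite big_indices; apply: eq_bigr => c _.
rewrite !mxE castmxE !mxE /=; congr (_ * ptrans _ _ (unvec _ _ ++ _)); by rewrite hlam.
Qed.
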